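(* Let $g:[0,\infty)\to[0,1]$ be continuously differentiable and strictly decreasing, and let $$f(x)=1-e^{-x}\big[1-g(x)(x+1)\big]-\int_0^xg(z)e^{-z}\,dz .$$ Assume $\min_{x\ge0}f(x)=g(0)$. For $\tau,\tau'\ge0$ define $$H(\tau,\tau')=1-e^{-\tau'}-\int_0^{\tau'}g(z)e^{-z}\,dz+g(\tau')\cdot\begin{cases}\tau e^{-\tau'} & \tau\le\tau',\\ \tau'e^{-\tau'}+e^{-\tau'}-e^{-\tau} & \tau>\tau'.\end{cases}$$ Then $H(\tau,\tau')\ge g(0)\,(1-e^{-\tau})$ for all $\tau,\tau'\ge0$. *)

(* Defs.v *)
From Stdlib Require Import Reals Lra ClassicalEpsilon.
Open Scope R_scope.

(* Riemann integral of f over [a,b], made total: the value of RiemannInt for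
   some integrability proof (independent of the proof, RiemannInt_P5) when f
   is Riemann integrable on [a,b]; an unspecified real otherwise. *)
Definition RInt (f : R -> R) (a b : R) : R :=
  epsilon (inhabits 0)
    (fun I => exists pr : Riemann_integrable f a b, RiemannInt pr = I).

Definition deriv_within_nonneg (g : R -> R) (g' : R) (x : R) : Prop :=
  forall eps, 0 < eps -> exists delta, 0 < delta /\
    forall h, h <> 0 -> 0 <= x + h -> Rabs h < delta ->
      Rabs ((g (x + h) - g x) / h - g') < eps.

Definition continuous_on_nonneg (u : R -> R) : Prop :=
  forall x, 0 <= x -> forall eps, 0 < eps -> exists delta, 0 < delta /\
    forall y, 0 <= y -> Rabs (y - x) < delta -> Rabs (u y - u x) < eps.

Definition C1_on_nonneg (g : R -> R) : Prop :=
  exists g' : R -> R, continuous_on_nonneg g' /\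
    forall x, 0 <= x -> deriv_within_nonneg g (g' x) x.

Definition f_of (g : R -> R) (x : R) : R :=
  1 - exp (- x) * (1 - g x * (x + 1)) - RInt (fun z => g z * exp (- z)) 0 x.

Definition H_of (g : R -> R) (tau tau' : R) : R :=
  1 - exp (- tau') - RInt (fun z => g z * exp (- z)) 0 tau'
  + g tau' * (if Rle_dec tau tau' then tau * exp (- tau')
              else tau' * exp (- tau') + exp (- tau') - exp (- tau)).

(* Main.v *)
Require Import Defs.
From Stdlib Require Import Reals Lra.
Open Scope R_scope.

Theorem mainTheorem14 (g : R -> R)
  (hrange : forall x, 0 <= x -> 0 <= g x <= 1)
  (hC1 : C1_on_nonneg g)
  (hdec : forall x y, 0 <= x -> x < y -> g y < g x)
  (hmin : (exists x0, 0 <= x0 /\ f_of g x0 = g 0) /\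
          (forall x, 0 <= x -> g 0 <= f_of g x)) :
  forall tau tau', 0 <= tau -> 0 <= tau' ->
    H_of g tau tau' >= g 0 * (1 - exp (- tau)).
Proof.
  intros tau tau' Ht Ht'.
  destruct hmin as [_ hf].
  pose proof (hf tau' Ht') as Hf. unfold f_of in Hf.
  assert (Hg : g tau' <= g 0).
  { destruct (Req_dec tau' 0) as [->|Hn]; [lra|].
    pose proof (hdec 0 tau' (Rle_refl 0) ltac:(lra)); lra. }
  pose proof (hrange tau' Ht') as [Hg0 Hg1].
  pose proof (exp_pos (- tau)) as Ep.
  unfold H_of. destruct (Rle_dec tau tau') as [Hle|Hgt].
  - set (d := tau' - tau).
    assert (E : exp (- tau') = exp (- tau) * exp (- d)).
    { rewrite <- exp_plus. f_equal. unfold d. ring. }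
    assert (K : (1 + d) * exp (- d) <= 1).
    { pose proof (exp_ineq1_le d). pose proof (exp_pos d).
      assert (exp (-d) * exp d = 1) by (rewrite <- exp_plus; replace (-d+d) with 0 by ring; apply exp_0).
      assert (0 < exp (-d)) by apply exp_pos. nra. }
    assert (K2 : g tau' * ((tau' + 1 - tau) * exp (- tau')) <= g 0 * exp (- tau)).
    { rewrite E. replace (tau' + 1 - tau) with (1 + d) by (unfold d; ring).
      assert (0 <= (1+d) * exp (-d)).
      { apply Rmult_le_pos. unfold d; lra. left; apply exp_pos. }
      apply Rle_trans with (g 0 * (exp (-tau) * ((1 + d) * exp (- d)))).
      - replace ((1 + d) * (exp (- tau) * exp (- d))) with (exp (-tau) * ((1 + d) * exp (- d))) by ring.
        apply Rmult_le_compat_r; [|lra]. apply Rmult_le_pos; lra.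
      - apply Rmult_le_compat_l; [lra|].
        rewrite <- (Rmult_1_r (exp (- tau))) at 2.
        apply Rmult_le_compat_l; lra. }
    nra.
  - nra.
Qed.
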